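(* Let $\mathcal H$ be an obstruction design of type $\lambda\vdash_n d$. Then $f_{\mathcal H}(w)=0$ for every tensor $w\in\bigotimes^3\mathbb C^n$ whose border rank satisfies $\underline R(w)<\chi'(\mathcal H)$.
   Context: Notation: $[d]=\{1,\dots,d\}$. A partition $\lambda$ is a finite nonincreasing sequence of natural numbers; $|\lambda|=\sum_i\lambda_i$, $\ell(\lambda)$ is the number of nonzero parts, and $\lambda^t$ is the transposed partition. For a triple $\lambda=(\lambda^{(1)},\lambda^{(2)},\lambda^{(3)})$ of partitions, $\lambda\vdash_n d$ means $|\lambda^{(k)}|=d$ and $\ell(\lambda^{(k)})\le n$ for $k=1,2,3$. An obstruction design is a finite subset $\mathcal H\subseteq[\ell_1]\times[\ell_2]\times[\ell_3]$. For $k\in\{1,2,3\}$ the $k$-slices of $\mathcal H$ are the nonempty sets $\{x\in\mathcal H:x_k=i\}$, $i\in[\ell_k]$; they form a set partition $E^{(k)}$ of $\mathcal H$. If $\mu^{(k)}$ is the partition obtained by sorting the slice sizes nonincreasingly, the type of $\mathcal H$ is $(\lambda^{(1)},\lambda^{(2)},\lambda^{(3)})$ with $\lambda^{(k)}=(\mu^{(k)})^t$. Definition of $f_{\mathcal H}$: for a finite totally ordered set $S$, a map $J:S\to\mathbb C^n$ and $e\subseteq S$ with $|e|\le n$, $\det J|_e$ is the determinant of the $|e|\times|e|$ matrix whose columns are the vectors $J(s)$, $s\in e$, in increasing order, truncated to their first $|e|$ coordinates. For an obstruction design $\mathcal H$ of type $\lambda\vdash_n d$ with a fixed total order, and a triple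 labeling $J=(J^{(1)},J^{(2)},J^{(3)}):\mathcal H\to(\mathbb C^n)^3$, set $\mathrm{eval}_{\mathcal H}(J)=\prod_{k=1}^3\prod_{e\in E^{(k)}}\det J^{(k)}|_e$. For $w=\sum_{i=1}^r u^{(1)}_i\otimes u^{(2)}_i\otimes u^{(3)}_i\in\bigotimes^3\mathbb C^n$ define $f_{\mathcal H}(w)=\sum_{I:\mathcal H\to[r]}\mathrm{eval}_{\mathcal H}(J_I)$ where $J_I^{(k)}(s)=u^{(k)}_{I(s)}$; this is a well-defined homogeneous polynomial of degree $d$ on $\bigotimes^3\mathbb C^n$. The rank $R(w)$ of $w\in\bigotimes^3\mathbb C^n$ is the least $r$ such that $w$ is a sum of $r$ tensors $u\otimes v\otimes x$; the border rank $\underline R(w)$ is the least $r$ such that $w$ is a limit of tensors of rank at most $r$. A proper coloring of $\mathcal H$ with $c$ colors is a map $\sigma:\mathcal H\to[c]$ that is injective on every slice (of each of the three directions); the chromatic index $\chi'(\mathcal H)$ is the least $c$ admitting a proper coloring. *)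

(* Defs.v *)
From HB Require Import structures.
From mathcomp Require Import all_boot all_order all_algebra.
Set Implicit Arguments. Unset Strict Implicit. Unset Printing Implicit Defensive.
Import Order.TTheory GRing.Theory Num.Theory.

(* Ambient index type of an obstruction design: [l1] x [l2] x [l3],
   encoded 0-based as 'I_l1 * 'I_l2 * 'I_l3. *)
Definition cube (l1 l2 l3 : nat) : finType := ('I_l1 * 'I_l2 * 'I_l3)%type.

Section Designs.
Variables l1 l2 l3 : nat.
Local Notation T := (cube l1 l2 l3).

Definition proj1 (x : T) : 'I_l1 := x.1.1.
Definition proj2 (x : T) : 'I_l2 := x.1.2.
Definition proj3 (x : T) : 'I_l3 := x.2.

Definition slices (I : finType) (p : T -> I) (H : {set T}) : seq {set T} :=
  [seq [set x in H | p x == i] | i <- enum I & [exists x in H, p x == i]].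

Definition part_size (la : seq nat) : nat := sumn la.
Definition part_length (la : seq nat) : nat := count (fun m => 0 < m) la.
Definition part_transpose (mu : seq nat) : seq nat :=
  [seq count (fun m => j < m) mu | j <- iota 0 (\max_(m <- mu) m)].

Definition slice_sizes (I : finType) (p : T -> I) (H : {set T}) : seq nat :=
  sort geq [seq #|(e : {set T})| | e <- slices p H].

Definition type_comp (I : finType) (p : T -> I) (H : {set T}) : seq nat :=
  part_transpose (slice_sizes p H).

Definition has_type_n (n d : nat) (H : {set T}) : Prop :=
  [/\ part_size (type_comp proj1 H) = d /\ part_length (type_comp proj1 H) <= n,
      part_size (type_comp proj2 H) = d /\ part_length (type_comp proj2 H) <= n &
      part_size (type_comp proj3 H) = d /\ part_length (type_comp proj3 H) <= n].

Definition proper_coloring (H : {set T}) (c : nat) (sigma : T -> nat) : Prop :=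
  (forall x, x \in H -> sigma x < c) /\
  (forall x y, x \in H -> y \in H -> x != y ->
     (proj1 x = proj1 y \/ proj2 x = proj2 y \/ proj3 x = proj3 y) ->
     sigma x <> sigma y).
Definition colorable (H : {set T}) (c : nat) : Prop :=
  exists sigma, proper_coloring H c sigma.
Definition is_chromatic_index (H : {set T}) (c : nat) : Prop :=
  colorable H c /\ forall c', colorable H c' -> c <= c'.

Local Open Scope ring_scope.

(* i-th coordinate (0-based) of a vector in C^n, 0 beyond n *)
Definition coord (C : nzRingType) (n : nat) (v : 'I_n -> C) (i : nat) : C :=
  if insub i is Some j then v j else 0.

(* det J|_e : columns J(s), s in e in increasing order, truncated to the
   first |e| coordinates; [s] is e listed in increasing order. *)
Definition sdet (C : comNzRingType) (n : nat) (J : T -> 'I_n -> C) (s : seq T) : C :=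
  \det (\matrix_(i < size s, j < size s) coord (J (tnth (in_tuple s) j)) i).

Definition ordered (ord : seq T) (e : {set T}) : seq T := [seq x <- ord | x \in e].

Definition eval_H (C : comNzRingType) (n : nat) (ord : seq T) (H : {set T})
  (J1 J2 J3 : T -> 'I_n -> C) : C :=
  (\prod_(e <- slices proj1 H) sdet J1 (ordered ord e)) *
  (\prod_(e <- slices proj2 H) sdet J2 (ordered ord e)) *
  (\prod_(e <- slices proj3 H) sdet J3 (ordered ord e)).

Definition Hsub (H : {set T}) : finType := {x : T | x \in H}.

Definition label (C : comNzRingType) (n : nat) (H : {set T}) (R : finType)
  (u : R -> 'I_n -> C) (I : {ffun Hsub H -> R}) (x : T) : 'I_n -> C :=
  if (insub x : option (Hsub H)) is Some y then u (I y) else (fun _ => 0).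

(* f_H evaluated on the decomposition w = sum_{r in R} u r (x) v r (x) x r *)
Definition fH_dec (C : comNzRingType) (n : nat) (ord : seq T) (H : {set T})
  (R : finType) (u v x : R -> 'I_n -> C) : C :=
  \sum_(I : {ffun Hsub H -> R})
     eval_H ord H (label u I) (label v I) (label x I).

End Designs.

Local Open Scope ring_scope.

Definition tensor (C : Type) (n : nat) := 'I_n -> 'I_n -> 'I_n -> C.

(* f_H(w), computed on the standard decomposition
   w = sum_{a,b,c} (w_abc e_a) (x) e_b (x) e_c *)
Definition std_u (C : nzRingType) n (w : tensor C n) (r : 'I_n * 'I_n * 'I_n) : 'I_n -> C :=
  fun i => if i == r.1.1 then w r.1.1 r.1.2 r.2 else 0.
Definition std_v (C : nzRingType) n (r : 'I_n * 'I_n * 'I_n) : 'I_n -> C :=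
  fun i => (i == r.1.2)%:R.
Definition std_x (C : nzRingType) n (r : 'I_n * 'I_n * 'I_n) : 'I_n -> C :=
  fun i => (i == r.2)%:R.

Definition fH (C : comNzRingType) (l1 l2 l3 n : nat) (ord : seq (cube l1 l2 l3))
  (H : {set cube l1 l2 l3}) (w : tensor C n) : C :=
  fH_dec ord H (std_u w) (@std_v C n) (@std_x C n).

Definition rank_le (C : nzRingType) n (w : tensor C n) (r : nat) : Prop :=
  exists u v x : 'I_r -> 'I_n -> C,
    forall a b c, w a b c = \sum_(i < r) u i a * v i b * x i c.

Definition border_rank_le (C : numDomainType) n (w : tensor C n) (r : nat) : Prop :=
  forall eps : C, 0 < eps ->
    exists w' : tensor C n, rank_le w' r /\
      forall a b c, `|w' a b c - w a b c| < eps.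

Definition is_border_rank (C : numDomainType) n (w : tensor C n) (r : nat) : Prop :=
  border_rank_le w r /\ forall r', border_rank_le w r' -> (r <= r')%N.

(* Main.v *)
Require Import Defs.
From HB Require Import structures.
From mathcomp Require Import all_boot all_order all_algebra.
From mathcomp Require Import ring perm.
Import Order.TTheory GRing.Theory Num.Theory.
Set Implicit Arguments. Unset Strict Implicit. Unset Printing Implicit Defensive.
Local Open Scope ring_scope.

Section Main.
Variables (C : numClosedFieldType) (l1 l2 l3 n : nat).
Local Notation T := (cube l1 l2 l3).
Variables (H : {set T}) (ord : seq T).
Local Notation HS := (Hsub H).

Definition mono (J : T -> 'I_n -> C) (rho : HS -> seq nat) : C :=
  \prod_(s : HS) \prod_(p <- rho s) Defs.coord (J (val s)) p.

Definition MF (m : HS -> nat) (F : (T -> 'I_n -> C) -> C) : Prop :=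
  exists (L : finType) (k : L -> C) (rho : L -> HS -> seq nat),
    (forall t s, size (rho t s) = m s) /\
    forall J, F J = \sum_(t : L) k t * mono J (rho t).

Lemma MF_ext m m' F F' : (forall y, m y = m' y) -> (forall J, F J = F' J) ->
  MF m F -> MF m' F'.
Proof.
move=> hm hF [L [k [rho [hs he]]]]; exists L, k, rho; split.
  by move=> t s; rewrite hs hm.
by move=> J; rewrite -hF he.
Qed.

Lemma MF_one : MF (fun _ => 0%N) (fun _ => 1).
Proof.
exists (ordinal 1), (fun _ => 1), (fun _ _ => [::]); split => // J.
rewrite big_ord1 mul1r /mono big1 // => s _; by rewrite big_nil.
Qed.

Lemma MF_mul m1 m2 F G : MF m1 F -> MF m2 G ->
  MF (fun y => m1 y + m2 y)%N (fun J => F J * G J).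
Proof.
move=> [L1 [k1 [r1 [hs1 he1]]]] [L2 [k2 [r2 [hs2 he2]]]].
exists (L1 * L2)%type, (fun t => k1 t.1 * k2 t.2),
  (fun t s => r1 t.1 s ++ r2 t.2 s); split.
  by move=> t s; rewrite size_cat hs1 hs2.
move=> J; rewrite he1 he2 big_distrlr /= pair_big /=.
apply: eq_bigr => t _.
rewrite /mono.
under [in RHS]eq_bigr => s _ do rewrite big_cat.
rewrite big_split /=.
ring.
Qed.

Lemma MF_prod (X : Type) (L : seq X) (m : X -> HS -> nat) (F : X -> (T -> 'I_n -> C) -> C) :
  (forall e, MF (m e) (F e)) ->
  MF (fun y => \sum_(e <- L) m e y)%N (fun J => \prod_(e <- L) F e J).
Proof.
move=> hF; elim: L => [|a L IH].
  by apply: MF_ext MF_one => [y|J]; rewrite big_nil.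
apply: MF_ext (MF_mul (hF a) IH) => [y|J]; by rewrite big_cons.
Qed.

Lemma part_prod m (g : 'I_m -> T) (F : 'I_m -> C) : (forall i, g i \in H) ->
  \prod_(y : HS) \prod_(i | g i == val y) F i = \prod_i F i.
Proof.
move=> hg.
rewrite (exchange_big_dep xpredT) //=.
apply: eq_bigr => i _.
by rewrite (big_pred1 (Sub (g i) (hg i) : HS)) // => y /=; rewrite eq_sym -val_eqE.
Qed.

Lemma sdet_MF (s : seq T) : all (fun x => x \in H) s ->
  MF (fun y => count_mem (val y) s) (fun J => sdet J s).
Proof.
move=> hs.
pose m := size s.
exists ({perm 'I_m} : finType), (fun sg : {perm 'I_m} => (-1) ^+ odd_perm sg),
  (fun (sg : {perm 'I_m}) (y : HS) => [seq (sg i : nat) | i <- index_enum 'I_m & tnth (in_tuple s) i == val y]).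
split.
  move=> t y; rewrite size_map size_filter; have E : index_enum 'I_m = enum 'I_m by rewrite enumT /index_enum locked_withE.
  rewrite E.
  by rewrite -[in RHS](_ : [seq tnth (in_tuple s) i | i <- enum 'I_m] = s) ?count_map // map_tnth_enum.
move=> J; rewrite /sdet -det_tr /determinant.
apply: eq_bigr => sg _; congr (_ * _).
have hg : forall i : 'I_m, tnth (in_tuple s) i \in H.
  by move=> i; apply: (allP hs); apply: mem_tnth.
transitivity (\prod_i Defs.coord (J (tnth (in_tuple s) i)) (sg i)).
  by apply: eq_bigr => i _; rewrite !mxE.
rewrite -(part_prod _ hg) /mono.
apply: eq_bigr => y _.
rewrite big_map big_filter.
by apply: eq_bigr => i /eqP ->.
Qed.

Hypothesis Hord : perm_eq ord (enum H).

Lemma ord_uniq : uniq ord.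
Proof. by rewrite (perm_uniq Hord) enum_uniq. Qed.

Lemma mem_ord x : (x \in ord) = (x \in H).
Proof. by rewrite (perm_mem Hord) mem_enum. Qed.

Lemma ordered_H e : all (fun x => x \in H) (ordered ord e).
Proof. by apply/allP => x; rewrite mem_filter mem_ord => /andP []. Qed.

Lemma count_ordered e (y : HS) : count_mem (val y) (ordered ord e) = (val y \in e).
Proof.
rewrite count_uniq_mem; last by rewrite filter_uniq // ord_uniq.
by rewrite mem_filter mem_ord (valP y) andbT.
Qed.

Lemma slices_cover (I : finType) (p : T -> I) (y : HS) :
  (\sum_(e <- slices p H) (val y \in e))%N = 1%N.
Proof.
rewrite /slices big_map big_filter.
have hu : p (val y) \in enum I by rewrite mem_enum.
rewrite big_mkcond (bigD1_seq _ hu (enum_uniq _)) /=.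
rewrite big1 => [|i hi].
  rewrite inE (valP y) eqxx /=.
  have -> : [exists x in H, p x == p (val y)].
    by apply/existsP; exists (val y); rewrite (valP y) eqxx.
  by rewrite addn0.
rewrite inE (valP y) /=.
case: ifP => // _; by rewrite eq_sym (negbTE hi).
Qed.

Lemma MF_dir (I : finType) (p : T -> I) :
  MF (fun y => 1%N) (fun J => \prod_(e <- slices p H) sdet J (ordered ord e)).
Proof.
apply: MF_ext (MF_prod (slices p H) (fun e => sdet_MF (ordered_H e))) => // y.
rewrite -(slices_cover p y); apply: eq_bigr => e _; exact: count_ordered.
Qed.


Lemma sdet_zero (J : T -> 'I_n -> C) (s : seq T) x y :
  x \in s -> y \in s -> x != y -> J x = J y -> sdet J s = 0.
Proof.
move=> xs ys nxy eJ.
have ix : (index x s < size s)%N by rewrite index_mem.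
have iy : (index y s < size s)%N by rewrite index_mem.
rewrite /sdet -det_tr.
apply: (@determinant_alternate _ _ _ (Ordinal ix) (Ordinal iy)).
  apply/negP => /eqP [] E; move: nxy.
  by rewrite -(nth_index x ys) -E nth_index // eqxx.
move=> k; rewrite !mxE.
by rewrite !(tnth_nth x) /= nth_index // nth_index // eJ.
Qed.

Lemma prod_seq0 (X : eqType) (L : seq X) (F : X -> C) e0 :
  e0 \in L -> F e0 = 0 -> \prod_(e <- L) F e = 0.
Proof.
move=> he hF; elim: L he => // a L IH.
rewrite in_cons big_cons => /orP [/eqP <-|/IH ->]; by rewrite ?hF ?mul0r ?mulr0.
Qed.

Lemma slices_zero (I : finType) (p : T -> I) (J : T -> 'I_n -> C) x y :
  x \in H -> y \in H -> x != y -> p x = p y -> J x = J y ->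
  \prod_(e <- slices p H) sdet J (ordered ord e) = 0.
Proof.
move=> xH yH nxy pxy eJ.
apply: (@prod_seq0 _ _ _ [set z in H | p z == p x]).
  apply/mapP; exists (p x) => //.
  rewrite mem_filter mem_enum andbT.
  by apply/existsP; exists x; rewrite xH eqxx.
apply: (sdet_zero (x := x) (y := y)) => //.
  by rewrite mem_filter !inE xH eqxx mem_ord xH.
by rewrite mem_filter !inE yH pxy eqxx mem_ord yH.
Qed.


Definition Pdir (I : finType) (p : T -> I) (J : T -> 'I_n -> C) :=
  \prod_(e <- slices p H) sdet J (ordered ord e).

Definition Rep (I : finType) (p : T -> I) (L : finType) (k : L -> C) (r : L -> HS -> seq nat) :=
  (forall t s, size (r t s) = 1%N) /\ forall J, Pdir p J = \sum_(t : L) k t * mono J (r t).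

Definition Gfun (L1 L2 L3 : finType) (k1 : L1 -> C) (k2 : L2 -> C) (k3 : L3 -> C)
  (r1 : L1 -> HS -> seq nat) (r2 : L2 -> HS -> seq nat) (r3 : L3 -> HS -> seq nat)
  (W : nat -> nat -> nat -> C) : C :=
  \sum_(t1 : L1) \sum_(t2 : L2) \sum_(t3 : L3) (k1 t1 * k2 t2 * k3 t3 *
    \prod_(s : HS) W (head 0%N (r1 t1 s)) (head 0%N (r2 t2 s)) (head 0%N (r3 t3 s))).

Definition Wdec (R : finType) (u v x : R -> 'I_n -> C) (p q r : nat) : C :=
  \sum_(i : R) Defs.coord (u i) p * Defs.coord (v i) q * Defs.coord (x i) r.

Lemma mono1 J rho : (forall s, size (rho s) = 1%N) ->
  mono J rho = \prod_s Defs.coord (J (val s)) (head 0%N (rho s)).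
Proof.
move=> hs; apply: eq_bigr => s _.
by case: (rho s) (hs s) => [|a [|]] //= _; rewrite big_seq1.
Qed.

Lemma label_val (R : finType) (u : R -> 'I_n -> C) (I : {ffun HS -> R}) (s : HS) :
  label u I (val s) = u (I s).
Proof. by rewrite /label valK. Qed.

Lemma sum3 (A B D : finType) (a : A -> C) (b : B -> C) (c : D -> C) :
  (\sum_i a i) * (\sum_j b j) * (\sum_k c k) = \sum_i \sum_j \sum_k (a i * b j * c k).
Proof.
rewrite big_distrlr big_distrl; apply: eq_bigr => i _ /=.
by rewrite big_distrlr.
Qed.

Lemma dec (L1 L2 L3 : finType) k1 k2 k3 r1 r2 r3 :
  @Rep _ (@proj1 l1 l2 l3) L1 k1 r1 -> @Rep _ (@proj2 l1 l2 l3) L2 k2 r2 ->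
  @Rep _ (@proj3 l1 l2 l3) L3 k3 r3 ->
  forall (R : finType) (u v x : R -> 'I_n -> C),
  fH_dec ord H u v x = Gfun k1 k2 k3 r1 r2 r3 (Wdec u v x).
Proof.
move=> [hs1 he1] [hs2 he2] [hs3 he3] R u v x.
rewrite /fH_dec /eval_H.
under eq_bigr => I _ do rewrite -!/(Pdir _ _) he1 he2 he3 sum3.
rewrite exchange_big; apply: eq_bigr => t1 _.
rewrite exchange_big; apply: eq_bigr => t2 _.
rewrite exchange_big; apply: eq_bigr => t3 _.
under eq_bigr => I _ do rewrite !mono1 //.
transitivity (\sum_(I : {ffun HS -> R}) k1 t1 * k2 t2 * k3 t3 *
   \prod_s (Defs.coord (u (I s)) (head 0%N (r1 t1 s)) *
            Defs.coord (v (I s)) (head 0%N (r2 t2 s)) *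
            Defs.coord (x (I s)) (head 0%N (r3 t3 s)))).
  apply: eq_bigr => I _.
  rewrite !big_split /=.
  have lv : forall (w : R -> 'I_n -> C) (r : HS -> nat),
    \prod_s Defs.coord (label w I (val s)) (r s) = \prod_s Defs.coord (w (I s)) (r s).
    by move=> w r; apply: eq_bigr => s _; rewrite label_val.
  rewrite !lv; ring.
rewrite -mulr_sumr; congr (_ * _).
rewrite /Wdec bigA_distr_bigA /=.
done.
Qed.


Lemma Gfun_ext (L1 L2 L3 : finType) k1 k2 k3 r1 r2 r3 (W W' : nat -> nat -> nat -> C) :
  (forall p q r, W p q r = W' p q r) ->
  @Gfun L1 L2 L3 k1 k2 k3 r1 r2 r3 W = Gfun k1 k2 k3 r1 r2 r3 W'.
Proof.
move=> hW; apply: eq_bigr => t1 _; apply: eq_bigr => t2 _; apply: eq_bigr => t3 _.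
by congr (_ * _); apply: eq_bigr => s _; rewrite hW.
Qed.

End Main.

Section Cont.
Variables (C : numClosedFieldType) (n : nat).

Definition Wext (w : tensor C n) (p q r : nat) : C :=
  match (insub p : option 'I_n), (insub q : option 'I_n), (insub r : option 'I_n) with
  | Some a, Some b, Some c => w a b c
  | _, _, _ => 0
  end.

Lemma Wdec_rank (R : finType) (u v x : R -> 'I_n -> C) (w : tensor C n) :
  (forall a b c, w a b c = \sum_i u i a * v i b * x i c) ->
  forall p q r, Wdec u v x p q r = Wext w p q r.
Proof.
move=> hw p q r; rewrite /Wdec /Wext /Defs.coord.
case: (insub p) => [a|]; case: (insub q) => [b|]; case: (insub r) => [c|];
  rewrite ?hw // big1 // => i _; by rewrite ?mulr0 ?mul0r.
Qed.

Lemma Wdec_std (w : tensor C n) p q r :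
  Wdec (std_u w) (@std_v C n) (@std_x C n) p q r = Wext w p q r.
Proof.
rewrite /Wdec /Wext /Defs.coord.
case: (insub p) => [a|]; case: (insub q) => [b|]; case: (insub r) => [c|];
  try (rewrite big1 // => i _; by rewrite ?mulr0 ?mul0r).
rewrite (bigD1 ((a, b), c)) //= big1 ?addr0.
  by rewrite /std_u /std_v /std_x /= !eqxx mulr1 mulr1.
move=> [[a' b'] c'] /= ne; rewrite /std_u /std_v /std_x /=.
case: (a =P a') => [ea|_]; last by rewrite !mul0r.
case: (b =P b') => [eb|_]; last by rewrite mulr0 mul0r.
case: (c =P c') => [ec|_]; last by rewrite mulr0.
by move: ne; rewrite ea eb ec eqxx.
Qed.

Definition LP (w0 : tensor C n) (F : tensor C n -> C) : Prop :=
  exists K : C, 0 <= K /\ forall w d, 0 < d -> d <= 1 ->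
    (forall a b c, `|w a b c - w0 a b c| <= d) -> `|F w - F w0| <= K * d.

Variable w0 : tensor C n.

Lemma LP_ext F F' : (forall w, F w = F' w) -> LP w0 F -> LP w0 F'.
Proof.
move=> e [K [K0 h]]; exists K; split => // w d d0 d1 hw; rewrite -!e; exact: h.
Qed.

Lemma LP_const c : LP w0 (fun _ => c).
Proof. by exists 0; split => // w d _ _ _; rewrite subrr normr0 mul0r. Qed.

Lemma LP_coord a b c : LP w0 (fun w => w a b c).
Proof. by exists 1; split => // w d _ _ hw; rewrite mul1r. Qed.

Lemma LP_add F G : LP w0 F -> LP w0 G -> LP w0 (fun w => F w + G w).
Proof.
move=> [KF [KF0 hF]] [KG [KG0 hG]]; exists (KF + KG); split; first exact: addr_ge0.
move=> w d d0 d1 hw.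
have -> : F w + G w - (F w0 + G w0) = (F w - F w0) + (G w - G w0) by ring.
apply: le_trans (ler_normD _ _) _; rewrite mulrDl.
by apply: lerD; [exact: hF | exact: hG].
Qed.

Lemma LP_mul F G : LP w0 F -> LP w0 G -> LP w0 (fun w => F w * G w).
Proof.
move=> [KF [KF0 hF]] [KG [KG0 hG]].
exists (KF * (`|G w0| + KG) + `|F w0| * KG); split.
  by apply: addr_ge0; apply: mulr_ge0 => //; apply: addr_ge0.
move=> w d d0 d1 hw.
have -> : F w * G w - F w0 * G w0 = (F w - F w0) * G w + F w0 * (G w - G w0) by ring.
apply: le_trans (ler_normD _ _) _; rewrite !normrM.
have hG1 : `|G w| <= `|G w0| + KG.
  have -> : G w = G w0 + (G w - G w0) by ring.
  apply: le_trans (ler_normD _ _) _; apply: lerD => //.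
  apply: le_trans (hG w d d0 d1 hw) _; exact: ler_piMr.
have h1 : `|F w - F w0| * `|G w| <= KF * d * (`|G w0| + KG).
  by apply: ler_pM => //; exact: hF.
have h2 : `|F w0| * `|G w - G w0| <= `|F w0| * (KG * d).
  by apply: ler_wpM2l => //; exact: hG.
apply: le_trans (lerD h1 h2) _.
by rewrite le_eqVlt; apply/orP; left; apply/eqP; ring.
Qed.

Lemma LP_sum_seq (X : Type) (s : seq X) (P : pred X) (F : X -> tensor C n -> C) :
  (forall i, LP w0 (F i)) -> LP w0 (fun w => \sum_(i <- s | P i) F i w).
Proof.
move=> hF; elim: s => [|a s IH].
  by apply: LP_ext (LP_const 0) => w; rewrite big_nil.
case Pa: (P a).
  by apply: LP_ext (LP_add (hF a) IH) => w; rewrite big_cons Pa.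
by apply: LP_ext IH => w; rewrite big_cons Pa.
Qed.

Lemma LP_prod_seq (X : Type) (s : seq X) (P : pred X) (F : X -> tensor C n -> C) :
  (forall i, LP w0 (F i)) -> LP w0 (fun w => \prod_(i <- s | P i) F i w).
Proof.
move=> hF; elim: s => [|a s IH].
  by apply: LP_ext (LP_const 1) => w; rewrite big_nil.
case Pa: (P a).
  by apply: LP_ext (LP_mul (hF a) IH) => w; rewrite big_cons Pa.
by apply: LP_ext IH => w; rewrite big_cons Pa.
Qed.

Lemma LP_sumT (X : finType) (F : X -> tensor C n -> C) :
  (forall i, LP w0 (F i)) -> LP w0 (fun w => \sum_i F i w).
Proof. exact: LP_sum_seq. Qed.

Lemma LP_prodT (X : finType) (F : X -> tensor C n -> C) :
  (forall i, LP w0 (F i)) -> LP w0 (fun w => \prod_i F i w).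
Proof. exact: LP_prod_seq. Qed.

Lemma LP_Wext p q r : LP w0 (fun w => Wext w p q r).
Proof.
rewrite /Wext.
case: (insub p : option 'I_n) => [a|]; case: (insub q : option 'I_n) => [b|]; case: (insub r : option 'I_n) => [c|];
  try exact: LP_const.
exact: LP_coord.
Qed.

End Cont.

Section Color.
Variables (C : numClosedFieldType) (l1 l2 l3 n : nat).
Local Notation T := (cube l1 l2 l3).
Variables (H : {set T}) (ord : seq T).
Hypothesis Hord : perm_eq ord (enum H).

Lemma fH_dec_zero (r : nat) (u v x : 'I_r -> 'I_n -> C) :
  ~ colorable H r -> fH_dec ord H u v x = 0.
Proof.
move=> hcol; apply: big1 => I _.
apply/eqP; apply/negPn/negP => hne; apply: hcol.
pose sigma (z : T) : nat := if (insub z : option (Hsub H)) is Some y then nat_of_ord (I y) else 0%N.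
exists sigma; split.
  by move=> z hz; rewrite /sigma (insubT (fun z => z \in H) hz).
move=> y z hy hz nyz hp e.
have eI : I (Sub y hy) = I (Sub z hz).
  by apply: val_inj; move: e; rewrite /sigma (insubT (fun z => z \in H) hy) (insubT (fun z => z \in H) hz).
have eL : forall (f : 'I_r -> 'I_n -> C), label f I y = label f I z.
  by move=> f; rewrite /label (insubT (fun z => z \in H) hy) (insubT (fun z => z \in H) hz) eI.
move: hne; rewrite /eval_H.
case: hp => [hp|[hp|hp]].
- by rewrite (slices_zero Hord hy hz nyz hp (eL u)) !mul0r eqxx.
- by rewrite (slices_zero Hord hy hz nyz hp (eL v)) mulr0 mul0r eqxx.
- by rewrite (slices_zero Hord hy hz nyz hp (eL x)) mulr0 eqxx.
Qed.

End Color.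

Unset Implicit Arguments.
Theorem proposition4p2 (C : numClosedFieldType) (l1 l2 l3 n d : nat)
  (H : {set cube l1 l2 l3}) (ord : seq (cube l1 l2 l3)) :
  perm_eq ord (enum H) ->
  has_type_n n d H ->
  forall (w : tensor C n) (r c : nat),
    is_border_rank w r -> is_chromatic_index H c -> (r < c)%N ->
    fH ord H w = 0%R.
Proof.
move=> Hord _ w r c [hbr _] [_ hmin] rc.
have [L1 [k1 [r1 [hs1 he1]]]] := MF_dir C n Hord (@proj1 l1 l2 l3).
have [L2 [k2 [r2 [hs2 he2]]]] := MF_dir C n Hord (@proj2 l1 l2 l3).
have [L3 [k3 [r3 [hs3 he3]]]] := MF_dir C n Hord (@proj3 l1 l2 l3).
have R1 : Rep n ord (@proj1 l1 l2 l3) k1 r1 by split.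
have R2 : Rep n ord (@proj2 l1 l2 l3) k2 r2 by split.
have R3 : Rep n ord (@proj3 l1 l2 l3) k3 r3 by split.
pose F (w : tensor C n) := Gfun k1 k2 k3 r1 r2 r3 (Wext w).
have fHE : forall w, fH ord H w = F w.
  move=> w'; rewrite /fH (dec R1 R2 R3); apply: Gfun_ext => p q s; exact: Wdec_std.
have zero : forall w' : tensor C n, rank_le w' r -> fH ord H w' = 0.
  move=> w' [u [v [x hw]]].
  rewrite fHE /F; transitivity (fH_dec ord H u v x).
    rewrite (dec R1 R2 R3); apply: Gfun_ext => p q s; by rewrite (Wdec_rank hw).
  apply: (fH_dec_zero Hord) => hc.
  by have := hmin r hc; rewrite leqNgt rc.
have [K [K0 hK]] : LP w F.
  apply: LP_sumT => t1; apply: LP_sumT => t2; apply: LP_sumT => t3.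
  apply: LP_mul; first exact: LP_const.
  apply: LP_prodT => s; exact: LP_Wext.
apply/eqP; apply: contraT => hne.
have t0 : 0 < `|fH ord H w| by rewrite normr_gt0.
set t := `|fH ord H w| in t0.
have z0 : 0 < K + t + 1 by rewrite -addrA; apply: ltr_wpDl => //; apply: ltr_wpDr.
pose dd := t / (K + t + 1).
have d0 : 0 < dd by apply: divr_gt0.
have d1 : dd <= 1.
  rewrite /dd ler_pdivrMr // mul1r (addrC K) -addrA lerDl.
  by apply: addr_ge0.
have Kd : K * dd < t.
  rewrite /dd mulrA ltr_pdivrMr // -subr_gt0.
  have -> : t * (K + t + 1) - K * t = t * (t + 1) by ring.
  by apply: mulr_gt0 => //; apply: addr_gt0.
have [w' [hr hw']] := hbr dd d0.
have := hK w' dd d0 d1 (fun a b c => ltW (hw' a b c)).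
rewrite -!fHE zero // sub0r normrN -/t => h.
by have := le_lt_trans h Kd; rewrite ltxx.
Qed.
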